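(* Let $\mathcal{H}$ be a complex Hilbert space, $H_1,H_2$ closed real linear subspaces with real orthogonal projections $E_1,E_2$, and set $X(E_1,E_2):=E_1+E_2-E_1\vee E_2$. (a) $X(E_1,E_2)$ is a real selfadjoint contraction with $\|X(E_1,E_2)\|=\|E_1E_2\|$. (b) $X(E_1,E_2)=0$ if and only if $E_1\le E_2^{\perp_{\mathbb{R}}}$. (c) If $E_1$ is standard and $E_1\le E_2'$, then $X(E_1,E_2)=0$ if and only if $E_2=0$.
   Context: Real orthogonal projections are real linear idempotents selfadjoint with respect to $\mathrm{Re}\langle\cdot,\cdot\rangle$. $E_1\vee E_2$ is the real orthogonal projection onto the closed real span of $H_1\cup H_2$. $E^{\perp_{\mathbb{R}}}=1-E$ is the projection onto the real orthogonal complement with respect to $\mathrm{Re}\langle\cdot,\cdot\rangle$. $E'=1+iEi$ is the projection onto the symplectic complement $\{\xi:\mathrm{Im}\langle\xi,h\rangle=0\ \forall h\in E\mathcal{H}\}$. $E\le F$ means $E\mathcal{H}\subset F\mathcal{H}$. $E$ (or its range $H$) is standard if $H\cap iH=\{0\}$ and $H+iH$ is dense in $\mathcal{H}$. *)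

(* Defs.v *)
From mathcomp Require Import all_boot all_order all_algebra.
From mathcomp Require Import boolp classical_sets reals.
From mathcomp Require Import complex.
Import GRing.Theory Num.Theory.

Set Implicit Arguments.
Unset Strict Implicit.
Unset Printing Implicit Defensive.

Local Open Scope ring_scope.
Local Open Scope classical_set_scope.

Section Hilbert.
Variables (R : realType) (V : lmodType R[i]).

Definition cRe (z : R[i]) : R := complex.Re z.

Definition rscale (r : R) (x : V) : V := (r%:C)%C *: x.

Definition is_inner_product (ip : V -> V -> R[i]) : Prop :=
  [/\ (forall (a : R[i]) (x y z : V), ip (a *: x + y) z = a * ip x z + ip y z),
      (forall x y : V, ip x y = (ip y x)^*),
      (forall x : V, 0 <= ip x x) &
      (forall x : V, ip x x = 0 -> x = 0)].

Variable ip : V -> V -> R[i].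

Definition hnorm (x : V) : R := Num.sqrt (cRe (ip x x)).

Definition hcauchy (u : nat -> V) : Prop :=
  forall e : R, 0 < e -> exists N : nat,
    forall m n : nat, (N <= m)%N -> (N <= n)%N -> hnorm (u m - u n) < e.

Definition hconverges_to (u : nat -> V) (l : V) : Prop :=
  forall e : R, 0 < e -> exists N : nat,
    forall n : nat, (N <= n)%N -> hnorm (u n - l) < e.

Definition is_hilbert : Prop :=
  is_inner_product ip /\
  (forall u : nat -> V, hcauchy u -> exists l : V, hconverges_to u l).

Definition hclosure (S : set V) : set V :=
  [set l | exists u : nat -> V, (forall n, S (u n)) /\ hconverges_to u l].

Definition hclosed (S : set V) : Prop := hclosure S `<=` S.

Definition real_subspace (H : set V) : Prop :=
  [/\ H 0,
      (forall x y, H x -> H y -> H (x + y)) &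
      (forall (r : R) x, H x -> H (rscale r x))].

Definition closed_real_subspace (H : set V) : Prop :=
  real_subspace H /\ hclosed H.

Definition closed_real_span2 (H1 H2 : set V) : set V :=
  hclosure [set x + y | x in H1 & y in H2].

Definition real_linear (T : V -> V) : Prop :=
  (forall x y, T (x + y) = T x + T y) /\
  (forall (r : R) x, T (rscale r x) = rscale r (T x)).

Definition re_selfadjoint (T : V -> V) : Prop :=
  forall x y, cRe (ip (T x) y) = cRe (ip x (T y)).

Definition real_orth_proj_onto (E : V -> V) (H : set V) : Prop :=
  [/\ real_linear E, (forall x, E (E x) = E x), re_selfadjoint E &
      range E = H].

Definition opnorm (T : V -> V) : R :=
  sup [set hnorm (T x) | x in [set x | hnorm x <= 1]].

Definition re_selfadjoint_contraction (T : V -> V) : Prop :=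
  [/\ real_linear T, re_selfadjoint T &
      (forall x, hnorm (T x) <= hnorm x)].

Definition proj_le (E F : V -> V) : Prop := range E `<=` range F.

Definition rperp (E : V -> V) : V -> V := fun x => x - E x.

(* E' = 1 + i E i  (symplectic complement) *)
Definition symp (E : V -> V) : V -> V := fun x => x + 'i *: E ('i *: x).

Definition standard (E : V -> V) : Prop :=
  (forall v, range E v -> range E ('i *: v) -> v = 0) /\
  hclosure [set x + 'i *: y | x in range E & y in range E] = setT.

Definition Xop (E1 E2 E12 : V -> V) : V -> V :=
  fun x => E1 x + E2 x - E12 x.

End Hilbert.

(* Main.v *)
Require Import Defs.
From mathcomp Require Import all_boot all_order all_algebra.
From mathcomp Require Import boolp classical_sets reals.
From mathcomp Require Import complex.
From mathcomp Require Import lra.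
Import Order.TTheory GRing.Theory Num.Theory.
Set Implicit Arguments.
Unset Strict Implicit.
Local Open Scope ring_scope.
Local Open Scope classical_set_scope.

Section Basics.
Variables (R : realType) (V : lmodType R[i]) (ip : V -> V -> R[i]).
Hypothesis hip : is_inner_product ip.

Local Notation rr x y := (cRe (ip x y)).
Local Notation hn := (hnorm ip).

Lemma ReD (a b : R[i]) : complex.Re (a + b) = complex.Re a + complex.Re b.
Proof. by case: a b => [? ?] [? ?]. Qed.
Lemma ReRM (a : R) (b : R[i]) : complex.Re ((a%:C)%C * b) = a * complex.Re b.
Proof. case: b => [? ?] /=. lra. Qed.
Lemma ReJ (a : R[i]) : complex.Re (a^*)%C = complex.Re a.
Proof. by case: a. Qed.

Lemma ipD x y z : ip (x + y) z = ip x z + ip y z.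
Proof. case: hip => h _ _ _. by have := h 1 x y z; rewrite scale1r mul1r. Qed.
Lemma ip0 z : ip 0 z = 0.
Proof. have := ipD 0 0 z. rewrite addr0 => e. have := congr1 (fun t => t - ip 0 z) e. by rewrite /= addrK subrr. Qed.
Lemma ipZ a x z : ip (a *: x) z = a * ip x z.
Proof. case: hip => h _ _ _. by rewrite -[a *: x]addr0 h ip0 addr0. Qed.

Lemma rrD x y z : rr (x + y) z = rr x z + rr y z.
Proof. by rewrite /cRe ipD ReD. Qed.
Lemma rrC x y : rr x y = rr y x.
Proof. case: hip => _ h _ _. by rewrite /cRe h ReJ. Qed.
Lemma rrZ a x z : rr (rscale a x) z = a * rr x z.
Proof. by rewrite /cRe /rscale ipZ ReRM. Qed.
Lemma rr0 z : rr 0 z = 0.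
Proof. by rewrite /cRe ip0. Qed.
Lemma rrN x z : rr (- x) z = - rr x z.
Proof. have := rrD x (-x) z. rewrite subrr rr0. lra. Qed.
Lemma rrB x y z : rr (x - y) z = rr x z - rr y z.
Proof. by rewrite rrD rrN. Qed.
Lemma rrDr x y z : rr z (x + y) = rr z x + rr z y.
Proof. by rewrite rrC rrD !(rrC z). Qed.
Lemma rrNr x z : rr z (- x) = - rr z x.
Proof. by rewrite rrC rrN rrC. Qed.
Lemma rrBr x y z : rr z (x - y) = rr z x - rr z y.
Proof. by rewrite rrDr rrNr. Qed.
Lemma rrZr a x z : rr z (rscale a x) = a * rr z x.
Proof. by rewrite rrC rrZ rrC. Qed.
Lemma rr0r z : rr z 0 = 0.
Proof. by rewrite rrC rr0. Qed.

Lemma rr_ge0 x : 0 <= rr x x.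
Proof. case: hip => _ _ h _. have := h x. rewrite lecE => /andP [_]. by []. Qed.
Lemma rr_eq0 x : rr x x = 0 -> x = 0.
Proof.
case: hip => _ _ h1 h2 e. apply: h2. have := ger0_Im (h1 x).
move: e; rewrite /cRe. case: (ip x x) => a b /= -> ->. by [].
Qed.

Lemma hn_ge0 x : 0 <= hn x.
Proof. exact: sqrtr_ge0. Qed.
Lemma hn_sq x : hn x ^+ 2 = rr x x.
Proof. by rewrite /hnorm sqr_sqrtr // rr_ge0. Qed.
Lemma hn_eq0 x : hn x = 0 -> x = 0.
Proof. move=> e; apply: rr_eq0; by rewrite -hn_sq e expr2 mulr0. Qed.
Lemma hn0 : hn 0 = 0.
Proof. by rewrite /hnorm rr0 sqrtr0. Qed.

Lemma sq_le (p q : R) : 0 <= q -> p ^+ 2 <= q ^+ 2 -> p <= q.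
Proof. move=> hq h. rewrite !expr2 in h. nra. Qed.

Lemma rr_sum_sq a b x y :
  rr (rscale a x + rscale b y) (rscale a x + rscale b y) =
  a ^+ 2 * rr x x + 2 * a * b * rr x y + b ^+ 2 * rr y y.
Proof.
rewrite !rrD !rrDr !rrZ !rrZr (rrC y x). rewrite !expr2. lra.
Qed.

Lemma CS x y : rr x y <= hn x * hn y.
Proof.
have h := rr_ge0 (rscale (hn y) x + rscale (- hn x) y).
rewrite rr_sum_sq -(hn_sq x) -(hn_sq y) in h.
have [a0|apos] := eqVneq (hn x) 0.
  by rewrite (hn_eq0 a0) rr0 hn0 mul0r.
have [b0|bpos] := eqVneq (hn y) 0.
  by rewrite (hn_eq0 b0) rr0r hn0 mulr0.
have ha : 0 < hn x by rewrite lt0r apos hn_ge0.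
have hb : 0 < hn y by rewrite lt0r bpos hn_ge0.
rewrite !expr2 in h.
have hab : 0 < hn x * hn y by rewrite mulr_gt0.
nra.
Qed.

Lemma hnN x : hn (- x) = hn x.
Proof. by rewrite /hnorm rrN rrNr opprK. Qed.

Lemma CSabs x y : `|rr x y| <= hn x * hn y.
Proof.
have h1 := CS x y. have h2 := CS (- x) y.
rewrite rrN hnN in h2. rewrite ler_norml. apply/andP; split; lra.
Qed.

Lemma hnB x y : hn (x - y) = hn (y - x).
Proof. by rewrite -hnN opprB. Qed.

Lemma hnD x y : hn (x + y) <= hn x + hn y.
Proof.
apply: sq_le. by rewrite addr_ge0 // hn_ge0.
rewrite hn_sq rrD !rrDr (rrC y x) -(hn_sq x) -(hn_sq y).
have := CS x y. have := hn_ge0 x. have := hn_ge0 y. rewrite !expr2. nra.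
Qed.

Lemma hnZ a x : hn (rscale a x) = `|a| * hn x.
Proof.
by rewrite /hnorm rrZ rrZr mulrA -expr2 sqrtrM ?sqrtr_sqr // sqr_ge0.
Qed.

Lemma eps_le {t K : R} : 0 <= K -> (forall e, 0 < e -> t <= K * e) -> t <= 0.
Proof.
move=> hK h. rewrite Order.TotalTheory.leNgt; apply/negP => tpos.
have hK1 : 0 < K + 1 by lra.
have := h (t / (K + 1)) (divr_gt0 tpos hK1).
have : K * (t / (K + 1)) < t.
  rewrite mulrA ltr_pdivrMr //. nra.
lra.
Qed.

Lemma orth_closure (z : V) (S : set V) w :
  (forall s, S s -> rr z s = 0) -> hclosure ip S w -> rr z w = 0.
Proof.
move=> hS [u [uS cu]].
have key : forall e, 0 < e -> `|rr z w| <= hn z * e.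
  move=> e /cu [N hN]. have := hN N (leqnn N).
  have -> : rr z w = rr z (w - u N) by rewrite rrBr (hS _ (uS N)) subr0.
  move=> hl. apply: le_trans (CSabs _ _) _. rewrite hnB.
  apply: ler_wpM2l; [exact: hn_ge0| exact: ltW].
have h := eps_le (hn_ge0 z) key. apply/eqP. rewrite -normr_eq0. 
apply/eqP/le_anti. by rewrite h normr_ge0.
Qed.

Lemma eq_rr a b : (forall y, rr a y = rr b y) -> a = b.
Proof.
move=> h. apply/eqP; rewrite -subr_eq0; apply/eqP. apply: rr_eq0.
by rewrite rrB h subrr.
Qed.

Section Proj.
Variables (E : V -> V) (H : set V).
Hypothesis pE : real_orth_proj_onto ip E H.

Lemma pD x y : E (x + y) = E x + E y.
Proof. by case: pE => [[]]. Qed.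
Lemma pZ a x : E (rscale a x) = rscale a (E x).
Proof. by case: pE => [[]]. Qed.
Lemma p0 : E 0 = 0.
Proof. have := pD 0 0. rewrite addr0 => e. have := congr1 (fun t => t - E 0) e. by rewrite /= addrK subrr. Qed.
Lemma pN x : E (- x) = - E x.
Proof. apply/eqP; rewrite -addr_eq0 -pD. by rewrite addNr p0. Qed.
Lemma pB x y : E (x - y) = E x - E y.
Proof. by rewrite pD pN. Qed.
Lemma pEE x : E (E x) = E x.
Proof. by case: pE. Qed.
Lemma psa x y : rr (E x) y = rr x (E y).
Proof. by case: pE. Qed.
Lemma pin x : H (E x).
Proof. case: pE => _ _ _ <-. by exists x. Qed.
Lemma pfix h : H h -> E h = h.
Proof. case: pE => _ _ _ <- [y _ <-]. exact: pEE. Qed.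
Lemma prr x : rr (E x) (E x) = rr x (E x).
Proof. by rewrite psa pEE. Qed.
Lemma pcontr x : hn (E x) <= hn x.
Proof.
have h := CS x (E x). rewrite -prr -hn_sq expr2 in h.
have := hn_ge0 (E x). have := hn_ge0 x. nra.
Qed.
End Proj.

Lemma proj_sub_comm E F HE HF : real_orth_proj_onto ip E HE ->
  real_orth_proj_onto ip F HF -> HE `<=` HF -> forall x, E (F x) = E x.
Proof.
move=> pE pF sub x. apply: eq_rr => y.
rewrite (psa pE) (psa pF) (pfix pF (sub _ (pin pE y))). by rewrite (psa pE).
Qed.
End Basics.

Lemma key_real {R : realType} (A B E c : R) : 0 <= A -> 0 <= B -> 0 <= E -> 0 <= c ->
  B ^+ 2 <= A * E -> B <= c * A -> B <= A ->
  B ^+ 2 + c ^+ 2 * B ^+ 2 <= c ^+ 2 * A ^+ 2 + E ^+ 2.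
Proof.
move=> hA hB hE hc h1 h2 h3.
have [A0|Apos] := eqVneq A 0.
  have B0 : B = 0 by apply/le_anti; rewrite hB -A0 andbT; lra.
  rewrite B0 !expr2 !mul0r mulr0 addr0. nra.
have hA' : 0 < A by rewrite lt0r Apos.
have h4 : B ^+ 2 * B ^+ 2 <= A ^+ 2 * E ^+ 2.
  apply: le_trans (ler_pM (sqr_ge0 B) (sqr_ge0 B) h1 h1) _. by rewrite mulrACA -!expr2.
have h5 : 0 <= (c ^+ 2 * A ^+ 2 - B ^+ 2) * (A ^+ 2 - B ^+ 2).
  apply: mulr_ge0; rewrite subr_ge0.
    by rewrite -exprMn ler_pXn2r // ?nnegrE // mulr_ge0.
    by rewrite ler_pXn2r // ?nnegrE.
have h6 : 0 <= A ^+ 2 * (c ^+ 2 * A ^+ 2 + E ^+ 2 - (B ^+ 2 + c ^+ 2 * B ^+ 2)).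
  have e4 : A ^+ 4 = A ^+ 2 * A ^+ 2 by rewrite -exprD.
  have e4' : B ^+ 4 = B ^+ 2 * B ^+ 2 by rewrite -exprD.
  nra.
rewrite -subr_ge0. move: h6; rewrite pmulr_rge0 //. by rewrite exprn_gt0.
Qed.

Section OpNorm.
Variables (R : realType) (V : lmodType R[i]) (ip : V -> V -> R[i]).
Hypothesis hip : is_inner_product ip.
Local Notation hn := (hnorm ip).

Variables (T : V -> V) (K : R).
Hypotheses (hK : 0 <= K) (hT : forall x, hn (T x) <= K * hn x).

Lemma opnorm_le : opnorm ip T <= K.
Proof.
apply: ge_sup.
  exists (hn (T 0)); exists 0 => //=. by rewrite (hn0 hip) ler01.
move=> y [x hx <-]. apply: le_trans (hT x) _.
rewrite -{2}[K]mulr1. exact: ler_wpM2l.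
Qed.

Lemma opnorm_sup y : hn y <= 1 -> hn (T y) <= opnorm ip T.
Proof.
move=> hy. apply: ub_le_sup; last by exists y.
exists K => z [x hx <-]. apply: le_trans (hT x) _.
rewrite -{2}[K]mulr1. exact: ler_wpM2l.
Qed.

Lemma opnorm_ge0 : 0 <= opnorm ip T.
Proof. apply: le_trans (@opnorm_sup 0 _); first exact: hn_ge0. by rewrite (hn0 hip) ler01. Qed.

Hypothesis lT : real_linear T.

Lemma T0 : T 0 = 0.
Proof.
case: lT => hD _. have := hD 0 0. rewrite addr0 => e.
have := congr1 (fun t => t - T 0) e. by rewrite /= addrK subrr.
Qed.

Lemma opnorm_ub x : hn (T x) <= opnorm ip T * hn x.
Proof.
have [n0|nn0] := eqVneq (hn x) 0.
  by rewrite (hn_eq0 hip n0) T0 (hn0 hip) mulr0.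
have np : 0 < hn x by rewrite lt0r nn0 hn_ge0.
have := @opnorm_sup (rscale (hn x)^-1 x).
rewrite (hnZ hip) (proj2 lT) (hnZ hip) ger0_norm ?invr_ge0 ?hn_ge0 // mulVf //.
move=> /(_ (lexx _)). by rewrite mulrC ler_pdivrMr.
Qed.
End OpNorm.

Section Main.
Variables (R : realType) (V : lmodType R[i]) (ip : V -> V -> R[i]).
Hypothesis hip : is_inner_product ip.
Variables (H1 H2 : set V) (E1 E2 E12 : V -> V).
Hypotheses (pE1 : real_orth_proj_onto ip E1 H1) (pE2 : real_orth_proj_onto ip E2 H2)
  (pE12 : real_orth_proj_onto ip E12 (closed_real_span2 ip H1 H2)).

Local Notation rr x y := (cRe (ip x y)).
Local Notation hn := (hnorm ip).
Local Notation X := (Xop E1 E2 E12).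

Lemma sub_closure (S : set V) : S `<=` hclosure ip S.
Proof.
move=> w Sw. exists (fun _ => w); split => // e e0. exists 0%N => n _.
by rewrite subrr (hn0 hip).
Qed.

Lemma H1_sub : H1 `<=` closed_real_span2 ip H1 H2.
Proof.
move=> h h1. apply: sub_closure. exists h => //. exists 0; last by rewrite addr0.
by rewrite -(p0 pE2); apply: (pin pE2).
Qed.
Lemma H2_sub : H2 `<=` closed_real_span2 ip H1 H2.
Proof.
move=> h h2. apply: sub_closure. exists 0.
  by rewrite -(p0 pE1); apply: (pin pE1).
by exists h => //; rewrite add0r.
Qed.

Lemma E12E1 x : E12 (E1 x) = E1 x.
Proof. apply: (pfix pE12). apply: H1_sub. exact: (pin pE1). Qed.
Lemma E12E2 x : E12 (E2 x) = E2 x.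
Proof. apply: (pfix pE12). apply: H2_sub. exact: (pin pE2). Qed.
Lemma E1E12 x : E1 (E12 x) = E1 x.
Proof. exact: (proj_sub_comm hip pE1 pE12 H1_sub). Qed.
Lemma E2E12 x : E2 (E12 x) = E2 x.
Proof. exact: (proj_sub_comm hip pE2 pE12 H2_sub). Qed.

Lemma X_E12 x : X (E12 x) = X x.
Proof. by rewrite /Xop E1E12 E2E12 (pEE pE12). Qed.
Lemma X_E2 x : X (E2 x) = E1 (E2 x).
Proof. by rewrite /Xop E12E2 (pEE pE2) addrK. Qed.
Lemma X_E1 x : X (E1 x) = E2 (E1 x).
Proof. by rewrite /Xop E12E1 (pEE pE1) addrC addKr. Qed.

Lemma X_lin : real_linear X.
Proof.
split.
  move=> x y. rewrite /Xop (pD pE1) (pD pE2) (pD pE12).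
  by rewrite (addrACA (E1 x)) opprD (addrACA (E1 x + E2 x)).
move=> a x. by rewrite /Xop (pZ pE1) (pZ pE2) (pZ pE12) /rscale !scalerDr scalerN.
Qed.

Lemma X_sa : re_selfadjoint ip X.
Proof.
move=> x y. rewrite /Xop (rrB hip) (rrD hip) (rrBr hip) (rrDr hip).
by rewrite (psa pE1) (psa pE2) (psa pE12).
Qed.

Lemma X_bound3 x : hn (X x) <= 3%:R * hn x.
Proof.
rewrite /Xop. apply: le_trans (hnD hip _ _) _. rewrite (hnN hip).
apply: le_trans (lerD (hnD hip _ _) (lexx _)) _.
have := pcontr hip pE1 x. have := pcontr hip pE2 x. have := pcontr hip pE12 x.
lra.
Qed.

Section Bound.
Variable c : R.
Hypotheses (c0 : 0 <= c) (hc : forall x, hn (E1 (E2 x)) <= c * hn x).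

Lemma Qw_bound y : hn (E2 (E1 y)) <= c * hn (E1 y).
Proof.
have h : hn (E2 (E1 y)) ^+ 2 <= hn (E1 y) * (c * hn (E2 (E1 y))).
  rewrite hn_sq // (prr pE2) -{1}(pEE pE1 y) (psa pE1).
  apply: le_trans (CS hip _ _) _. apply: ler_wpM2l; first exact: hn_ge0.
  by have := hc (E2 (E1 y)); rewrite (pEE pE2).
have [q0|qn0] := eqVneq (hn (E2 (E1 y))) 0.
  by rewrite q0 mulr_ge0 // hn_ge0.
have qp : 0 < hn (E2 (E1 y)) by rewrite lt0r qn0 hn_ge0.
rewrite -(ler_pM2r qp). apply: le_trans _ _; first by rewrite -expr2; exact: h.
by rewrite mulrCA mulrA.
Qed.

Lemma main_ineq u v : H1 u -> H2 v -> hn (E2 u + E1 v) <= c * hn (u + v).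
Proof.
move=> hu hv.
apply: sq_le. by rewrite mulr_ge0 // hn_ge0.
have hw := Qw_bound (u + v).
have hw2 : hn (E2 (E1 (u + v))) ^+ 2 <= c ^+ 2 * hn (E1 (u + v)) ^+ 2.
  by rewrite -exprMn ler_pXn2r // ?nnegrE ?hn_ge0 ?mulr_ge0 // hn_ge0.
rewrite !hn_sq // in hw2. rewrite exprMn !hn_sq //.
rewrite (pD pE1) (pfix pE1 hu) (pD pE2) in hw2.
have Ev : E1 v = E1 (E2 v) by rewrite (pfix pE2 hv).
have hk := @key_real R _ _ _ c (hn_ge0 ip v) (hn_ge0 ip (E1 v)) (hn_ge0 ip (E2 (E1 v))) c0.
have k1 : hn (E1 v) ^+ 2 <= hn v * hn (E2 (E1 v)).
  rewrite hn_sq // (prr pE1) -{1}(pfix pE2 hv) (psa pE2). exact: CS.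
have k2 : hn (E1 v) <= c * hn v by rewrite Ev; apply: hc.
have k3 : hn (E1 v) <= hn v by apply: (pcontr hip pE1).
have := hk k1 k2 k3. rewrite !hn_sq //.
move: hw2. rewrite !(rrD hip) !(rrDr hip).
have e1 : rr u (E1 v) = rr u v by rewrite -(psa pE1) (pfix pE1 hu).
have e2 : rr (E2 u) (E2 (E1 v)) = rr (E2 u) (E1 v) by rewrite -(psa pE2) (pEE pE2).
rewrite (rrC hip (E1 v) u) e1 (rrC hip (E2 (E1 v)) (E2 u)) e2 (rrC hip v u) (rrC hip (E1 v) (E2 u)).
lra.
Qed.
End Bound.

Lemma X_uv u v : H1 u -> H2 v -> X (u + v) = E2 u + E1 v.
Proof.
move=> hu hv. rewrite /Xop (pD pE1) (pD pE2) (pD pE12) (pfix pE12 (H1_sub hu)) (pfix pE12 (H2_sub hv)).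
rewrite (pfix pE1 hu) (pfix pE2 hv). apply: (addIr (u + v)). rewrite subrK.
by rewrite addrACA [RHS]addrACA (addrC u).
Qed.

Lemma X_sub x y : X x = X (x - y) + X y.
Proof. by rewrite -(proj1 X_lin) subrK. Qed.

Section Bound2.
Variable c : R.
Hypotheses (c0 : 0 <= c) (hc : forall x, hn (E1 (E2 x)) <= c * hn x).

Lemma X_bound_span w : closed_real_span2 ip H1 H2 w -> hn (X w) <= c * hn w.
Proof.
move=> [s [sS cs]].
rewrite -subr_le0. apply: (@eps_le _ _ (3%:R + c)); first by rewrite addr_ge0.
move=> e /cs [N hN]. have := hN N (leqnn N). move: (sS N) => [u hu [v hv <-]] {hN} hl.
rewrite (X_sub w (u + v)) (X_uv hu hv).
have h1 := X_bound3 (w - (u + v)).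
have h2 := main_ineq c0 hc hu hv.
have h3 := hnD hip (X (w - (u + v))) (E2 u + E1 v).
have h4 : hn (u + v) <= hn w + hn (u + v - w).
  by have := hnD hip w (u + v - w); rewrite addrC subrK.
have hl2 := hl. rewrite hnB in hl2.
have h5 : c * hn (u + v) <= c * hn w + c * e.
  rewrite -mulrDr. apply: ler_wpM2l => //. apply: le_trans h4 _. rewrite lerD2l. exact: ltW.
lra. all: exact: hip.
Qed.

Lemma X_bound x : hn (X x) <= c * hn x.
Proof.
rewrite -X_E12. apply: le_trans (X_bound_span (pin pE12 x)) _.
apply: ler_wpM2l => //. exact: (pcontr hip pE12).
Qed.
End Bound2.

Lemma X_zero_of_orth : (forall x, E2 (E1 x) = 0) -> (forall x, E1 (E2 x) = 0) ->
  X = (fun _ => 0).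
Proof.
move=> h21 h12. apply: funext => x.
set s := E1 x + E2 x. set z := x - s.
have Es : E12 s = s by rewrite /s (pD pE12) E12E1 E12E2.
have orth : forall t, [set a + b | a in H1 & b in H2] t -> rr z t = 0.
  move=> t [a ha [b hb <-]].
  rewrite (rrDr hip) /z /s !(rrB hip) !(rrD hip) (psa pE1) (psa pE2) (psa pE1) (psa pE2).
  rewrite (pfix pE1 ha) (pfix pE2 hb).
  have ea : E2 a = 0 by rewrite -(pfix pE1 ha) h21.
  have eb : E1 b = 0 by rewrite -(pfix pE2 hb) h12.
  rewrite ea eb !(rr0r hip). lra.
have Ez : E12 z = 0.
  apply: (rr_eq0 hip). rewrite (prr pE12). apply: (orth_closure hip orth). exact: pin pE12 z.
have : E12 x = s.
  have -> : x = s + z by rewrite /z addrC subrK.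
  by rewrite (pD pE12) Es Ez addr0.
by rewrite /Xop => ->; rewrite subrr.
Qed.

Lemma partb : (X = (fun _ => 0)) <-> proj_le E1 (rperp E2).
Proof.
split.
  move=> h y [x _ <-]. exists (E1 x) => //. rewrite /rperp.
  by have := congr1 (fun f => f (E1 x)) h; rewrite /= X_E1 => ->; rewrite subr0.
move=> hle.
have h21 : forall x, E2 (E1 x) = 0.
  move=> x. have [z _ e] := hle (E1 x) (ex_intro2 _ _ x I erefl).
  by rewrite -e /rperp (pB pE2) (pEE pE2) subrr.
apply: X_zero_of_orth => // x. apply: (eq_rr hip) => y.
by rewrite (psa pE1) (psa pE2) h21 (rr0r hip) (rr0 hip).
Qed.

Lemma partc : standard ip E1 -> proj_le E1 (symp E2) ->
  (X = (fun _ => 0) <-> E2 = (fun _ => 0)).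
Proof.
move=> [_ dense] hsym. split.
  move=> /partb hle.
  have h21 : forall x, E2 (E1 x) = 0.
    move=> x. have [z _ e] := hle (E1 x) (ex_intro2 _ _ x I erefl).
    by rewrite -e /rperp (pB pE2) (pEE pE2) subrr.
  have h2i : forall x, E2 ('i%C *: E1 x) = 0.
    move=> x. have [y _ e] := hsym (E1 x) (ex_intro2 _ _ x I erefl).
    rewrite -e /symp scalerDr scalerA.
    have -> : ('i * 'i)%C = -1 :> R[i] by rewrite -expr2 sqr_i.
    by rewrite scaleN1r (pB pE2) (pEE pE2) subrr.
  apply: funext => x. apply: (rr_eq0 hip).
  apply: (orth_closure hip (S := [set a + 'i%C *: b | a in range E1 & b in range E1])).
    move=> t [a [a' _ <-] [b [b' _ <-] <-]].
    by rewrite (rrDr hip) !(psa pE2) h21 h2i !(rr0r hip) addr0.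
  by rewrite dense.
move=> e2. apply: X_zero_of_orth => x; rewrite e2 //. exact: (p0 pE1).
Qed.
End Main.

Unset Implicit Arguments.
Set Strict Implicit.

Theorem proposition5p4 (R : realType) (V : lmodType R[i])
  (ip : V -> V -> R[i]) (hV : is_hilbert ip)
  (H1 H2 : set V) (E1 E2 E12 : V -> V)
  (cH1 : closed_real_subspace ip H1) (cH2 : closed_real_subspace ip H2)
  (pE1 : real_orth_proj_onto ip E1 H1) (pE2 : real_orth_proj_onto ip E2 H2)
  (pE12 : real_orth_proj_onto ip E12 (closed_real_span2 ip H1 H2)) :
  (* (a) *)
  (re_selfadjoint_contraction ip (Xop E1 E2 E12) /\
   opnorm ip (Xop E1 E2 E12) = opnorm ip (E1 \o E2)) /\
  (* (b) *)
  ((Xop E1 E2 E12 = (fun _ => 0)) <-> proj_le E1 (rperp E2)) /\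
  (* (c) *)
  (standard ip E1 -> proj_le E1 (symp E2) ->
     (Xop E1 E2 E12 = (fun _ => 0) <-> E2 = (fun _ => 0))).
Proof.
have hip : is_inner_product ip by case: hV.
split; last first.
  split; first exact: (partb hip pE1 pE2 pE12).
  exact: (partc hip pE1 pE2 pE12).
have lin12 : real_linear (E1 \o E2).
  split => [x y|a x] /=; first by rewrite (pD pE2) (pD pE1).
  by rewrite (pZ pE2) (pZ pE1).
have b12 : forall x, hnorm ip ((E1 \o E2) x) <= 1 * hnorm ip x.
  move=> x /=. rewrite mul1r. apply: le_trans (pcontr hip pE1 _) _. exact: (pcontr hip pE2).
have c0 := opnorm_ge0 hip ler01 b12.
have hc : forall x, hnorm ip (E1 (E2 x)) <= opnorm ip (E1 \o E2) * hnorm ip x.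
  exact: (opnorm_ub hip ler01 b12 lin12).
have c1 := opnorm_le hip ler01 b12.
have Xb := X_bound hip pE1 pE2 pE12 c0 hc.
have Xlin := X_lin pE1 pE2 pE12.
split.
  split => //; first exact: (X_sa hip pE1 pE2 pE12).
  move=> x. apply: le_trans (Xb x) _. rewrite -{2}[hnorm ip x]mul1r.
  apply: ler_wpM2r => //. exact: hn_ge0.
apply: le_anti. rewrite (opnorm_le hip c0 Xb) /=.
have N0 := opnorm_ge0 hip c0 Xb.
apply: (opnorm_le hip N0) => x /=.
rewrite -(X_E2 hip pE1 pE2 pE12).
apply: le_trans (opnorm_ub hip c0 Xb Xlin _) _.
apply: ler_wpM2l => //. exact: (pcontr hip pE2).
Qed.
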